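(* Let $p,q$ be positive integers with $\gcd(p,q)=1$, $p$ odd and $p/(2q)-1\in(-1,1)$. Then \[ \mathcal{O}(p/2q)=\Big\{\pm A\Big(\frac{(2\ell+1)^2}{4q^2}\Big):\ \ell\in\{0,1,\dots,q-1\}\Big\} \] and \[ \mathcal{E}(p/2q)=\{\pm A(\ell^2/q^2):\ \ell\in\{0,1,\dots,q-1\}\}. \]
   Context: Nodes: $x_{k,n}:=2k/n-1$, $k=0,\dots,n$; $D_n(x)=\sum_{k=0}^n(-1)^k\frac{1}{x-x_{k,n}}$. $A(y)=\sum_{k=0}^\infty(-1)^k\frac{4k+2}{(2k+1)^2-y}$ for $y\in[0,1)$. A sequence $n_j$ is a strictly increasing map $\mathbb{N}\to\mathbb{N}$, odd (even) if all $n_j$ are odd (even); $x$ is regular for $n_j$ if there is $j_0$ with $x\notin\{x_{0,n_j},\dots,x_{n_j,n_j}\}$ for $j\ge j_0$. For a rational $r$ with $x=r-1\in(-1,1)$, $\mathcal{O}(r)$ is the set of $L\in\overline{\mathbb{R}}=\mathbb{R}\cup\{\pm\infty\}$ such that $\lim_{j\to\infty}D_{n_j}(x)/n_j=L$ for some odd sequence $n_j$ for which $x$ is regular; $\mathcal{E}(r)$ is defined likewise with even sequences. Here $p/2q$ means $p/(2q)$. *)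

(* Defs.v *)
From Stdlib Require Import Reals Arith.
From Coquelicot Require Import Coquelicot.
Open Scope R_scope.

Definition node (k n : nat) : R := 2 * INR k / INR n - 1.

(* D_n(x) = sum_{k=0}^n (-1)^k / (x - x_{k,n})  (sum_f_R0 f n has n+1 terms) *)
Definition D (n : nat) (x : R) : R :=
  sum_f_R0 (fun k => (-1) ^ k / (x - node k n)) n.

(* A(y) = sum_{k>=0} (-1)^k (4k+2)/((2k+1)^2 - y), the (conditionally
   convergent) series, as the limit of its partial sums. *)
Definition A (y : R) : R :=
  Series (fun k => (-1) ^ k * (4 * INR k + 2) / ((2 * INR k + 1) ^ 2 - y)).

Definition strictly_increasing (nj : nat -> nat) : Prop :=
  forall j, (nj j < nj (S j))%nat.

Definition odd_seq (nj : nat -> nat) : Prop := forall j, Nat.odd (nj j) = true.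
Definition even_seq (nj : nat -> nat) : Prop := forall j, Nat.even (nj j) = true.

Definition regular (x : R) (nj : nat -> nat) : Prop :=
  exists j0, forall j, (j0 <= j)%nat -> forall k, (k <= nj j)%nat -> x <> node k (nj j).

Definition O_set (r : R) (L : Rbar) : Prop :=
  exists nj : nat -> nat, strictly_increasing nj /\ odd_seq nj /\ regular (r - 1) nj /\
    is_lim_seq (fun j => D (nj j) (r - 1) / INR (nj j)) L.

Definition E_set (r : R) (L : Rbar) : Prop :=
  exists nj : nat -> nat, strictly_increasing nj /\ even_seq nj /\ regular (r - 1) nj /\
    is_lim_seq (fun j => D (nj j) (r - 1) / INR (nj j)) L.

(* Main.v *)
Require Import Defs.
From Stdlib Require Import Reals Arith Lia Lra Classical.
From Coquelicot Require Import Coquelicot.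
Require Import Defs.
Open Scope R_scope.

Lemma m1sq : forall c, (-1)^c * (-1)^c = 1.
Proof. induction c; simpl; [ring|]. replace (-1 * (-1) ^ c * (-1 * (-1) ^ c)) with ((-1)^c*(-1)^c) by ring. auto. Qed.

Lemma Rabs_m1pow : forall c x, Rabs ((-1)^c * x) = Rabs x.
Proof. intros. rewrite Rabs_mult, pow_1_abs. ring. Qed.

Lemma sum_rev : forall (f : nat -> R) c,
  sum_f_R0 (fun k => (-1)^k * f (c - k)%nat) c = (-1)^c * sum_f_R0 (fun i => (-1)^i * f i) c.
Proof.
  intros f c. induction c.
  - simpl. ring.
  - rewrite decomp_sum by lia. simpl pred.
    replace (sum_f_R0 (fun i : nat => (-1) ^ S i * f (S c - S i)%nat) c)
      with (-1 * sum_f_R0 (fun k => (-1)^k * f (c - k)%nat) c).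
    2:{ rewrite scal_sum. apply sum_eq. intros. simpl. ring. }
    rewrite IHc. simpl sum_f_R0 at 2. simpl.
    replace (S c - 0)%nat with (S c) by lia.
    pose proof (m1sq c). 
    replace (1 * f (S c) + -1 * ((-1) ^ c * sum_f_R0 (fun i : nat => (-1) ^ i * f i) c))
      with (((-1)^c * (-1)^c) * f (S c) - (-1) ^ c * sum_f_R0 (fun i : nat => (-1) ^ i * f i) c) by (rewrite H; ring).
    ring.
Qed.

Lemma alt_tail : forall (b : nat -> R), (forall i, 0 <= b (S i) <= b i) ->
  forall k M, 0 <= (-1)^(S M) * (sum_f_R0 (fun i => (-1)^i * b i) (M + S k) - sum_f_R0 (fun i => (-1)^i * b i) M) <= b (S M).
Proof.
  intros b Hb k. induction k; intros M.
  - replace (M + 1)%nat with (S M) by lia.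
    assert (E : sum_f_R0 (fun i => (-1)^i * b i) (S M) = sum_f_R0 (fun i => (-1)^i * b i) M + (-1)^(S M) * b (S M)) by reflexivity.
    rewrite E.
    replace ((-1) ^ S M * (sum_f_R0 (fun i : nat => (-1) ^ i * b i) M + (-1) ^ S M * b (S M) -
      sum_f_R0 (fun i : nat => (-1) ^ i * b i) M)) with (((-1)^S M * (-1)^S M) * b (S M)) by ring.
    rewrite m1sq. specialize (Hb M). lra.
  - specialize (IHk (S M)).
    replace (M + S (S k))%nat with (S M + S k)%nat by lia.
    set (S1 := sum_f_R0 (fun i : nat => (-1) ^ i * b i) (S M + S k)) in *.
    replace (sum_f_R0 (fun i : nat => (-1) ^ i * b i) (S M)) with
      (sum_f_R0 (fun i : nat => (-1) ^ i * b i) M + (-1)^(S M) * b (S M)) in IHk by reflexivity.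
    set (S0 := sum_f_R0 (fun i : nat => (-1) ^ i * b i) M) in *.
    replace ((-1) ^ S (S M) * (S1 - (S0 + (-1) ^ S M * b (S M)))) with
      (- ((-1) ^ S M * (S1 - S0)) + ((-1)^S M * (-1)^S M) * b (S M)) in IHk by (simpl; ring).
    rewrite m1sq in IHk. pose proof (Hb (S M)). pose proof (Hb M). lra.
Qed.

Lemma alt_diff : forall (b : nat -> R), (forall i, 0 <= b (S i) <= b i) ->
  forall M N, (M <= N)%nat ->
  Rabs (sum_f_R0 (fun i => (-1)^i * b i) N - sum_f_R0 (fun i => (-1)^i * b i) M) <= b (S M).
Proof.
  intros b Hb M N HMN.
  destruct (Nat.eq_dec M N) as [->|Hne].
  - rewrite Rminus_eq_0, Rabs_R0. destruct (Hb N); lra.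
  - replace N with (M + S (N - M - 1))%nat by lia.
    pose proof (alt_tail b Hb (N - M - 1) M).
    rewrite <- (Rabs_m1pow (S M)). rewrite Rabs_right by lra. lra.
Qed.

Definition bw (w : R) (i : nat) : R := 2 * (2 * INR i + 1) / ((2 * INR i + 1) ^ 2 - w ^ 2).

Lemma den_pos : forall w i, -1 < w < 1 -> 0 < (2 * INR i + 1) ^ 2 - w ^ 2.
Proof. intros. pose proof (pos_INR i). nra. Qed.

Lemma bw_dec : forall w, -1 < w < 1 -> forall i, 0 <= bw w (S i) <= bw w i.
Proof.
  intros w Hw i. unfold bw. rewrite S_INR. pose proof (pos_INR i).
  pose proof (den_pos w i Hw). pose proof (den_pos w (S i) Hw). rewrite S_INR in H1.
  split.
  - apply Rle_mult_inv_pos; nra.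
  - apply Rmult_le_reg_r with (((2 * INR i + 1) ^ 2 - w ^ 2) * ((2 * (INR i + 1) + 1) ^ 2 - w ^ 2)).
    + nra.
    + field_simplify; try lra. nra.
Qed.

Lemma bw_bound : forall w, -1 < w < 1 -> forall i, bw w (S i) <= / INR (S i).
Proof.
  intros w Hw i. unfold bw. rewrite S_INR. pose proof (pos_INR i).
  pose proof (den_pos w (S i) Hw). rewrite S_INR in H0.
  apply Rmult_le_reg_r with (((2 * (INR i + 1) + 1) ^ 2 - w ^ 2) * (INR i + 1)).
  + nra.
  + field_simplify; try lra. nra.
Qed.

Lemma bw_cv0 : forall w, -1 < w < 1 -> Un_cv (bw w) 0.
Proof.
  intros w Hw eps He. destruct (archimed_cor1 eps He) as [N [HN HN0]].
  exists N. intros n Hn. unfold Rdist. rewrite Rminus_0_r.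
  destruct n as [|n]; [lia|].
  pose proof (bw_dec w Hw n). pose proof (bw_bound w Hw n).
  rewrite Rabs_right by lra.
  assert (/ INR (S n) <= / INR N).
  { apply Rinv_le_contravar. apply lt_0_INR; lia. apply le_INR; lia. }
  lra.
Qed.

Lemma A_approx : forall w, -1 < w < 1 -> forall M,
  Rabs (sum_f_R0 (fun i => (-1)^i * bw w i) M - A (w^2)) <= bw w (S M).
Proof.
  intros w Hw M.
  destruct (alternated_series (bw w)) as [l Hl].
  - intro n. apply (bw_dec w Hw n).
  - apply bw_cv0; auto.
  - assert (HA : A (w^2) = l).
    { unfold A. apply is_series_unique. apply is_series_Reals.
      intros eps He. destruct (Hl eps He) as [N HN]. exists N. intros n Hn.
      specialize (HN n Hn). unfold Rdist in *.
      replace (sum_f_R0 (fun k : nat => (-1) ^ k * (4 * INR k + 2) / ((2 * INR k + 1) ^ 2 - w ^ 2)) n)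
        with (sum_f_R0 (tg_alt (bw w)) n); auto.
      apply sum_eq. intros i _. unfold tg_alt, bw. pose proof (den_pos w i Hw). field. lra. }
    rewrite HA.
    assert (Hd := alt_diff (bw w) (bw_dec w Hw) M).
    apply Rnot_lt_le. intro Hc.
    set (e := Rabs (sum_f_R0 (fun i : nat => (-1) ^ i * bw w i) M - l) - bw w (S M)).
    assert (He : e > 0) by (unfold e; lra).
    destruct (Hl e He) as [N HN].
    specialize (HN (max N M) (Nat.le_max_l _ _)). specialize (Hd (max N M) (Nat.le_max_r _ _)).
    unfold Rdist, tg_alt in HN.
    set (a := sum_f_R0 (fun i : nat => (-1) ^ i * bw w i) (Init.Nat.max N M)) in *.
    set (c := sum_f_R0 (fun i : nat => (-1) ^ i * bw w i) M) in *.
    unfold e in HN. 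
    pose proof (Rabs_triang (c - a) (a - l)). replace (c - a + (a - l)) with (c - l) in H by ring.
    rewrite Rabs_minus_sym in Hd. lra.
Qed.

Definition S1 (w : R) (N : nat) := sum_f_R0 (fun i => (-1)^i * / (2 * INR i + 1 + w)) N.
Definition S2 (w : R) (N : nat) := sum_f_R0 (fun i => (-1)^i * / (2 * INR i + 1 - w)) N.

Lemma two_sums : forall w, -1 < w < 1 -> forall N1 N2,
  Rabs (S1 w N1 + S2 w N2 - A (w^2)) <= 2 * / INR (S (min N1 N2)).
Proof.
  intros w Hw N1 N2. set (M := min N1 N2).
  assert (H1 : Rabs (S1 w N1 - S1 w M) <= / (2 * INR (S M) + 1 + w)).
  { unfold S1. apply (alt_diff (fun i => / (2 * INR i + 1 + w))); [|lia].
    intro i. rewrite S_INR. pose proof (pos_INR i). split.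
    - left. apply Rinv_0_lt_compat. lra.
    - apply Rinv_le_contravar; lra. }
  assert (H2 : Rabs (S2 w N2 - S2 w M) <= / (2 * INR (S M) + 1 - w)).
  { unfold S2. apply (alt_diff (fun i => / (2 * INR i + 1 - w))); [|lia].
    intro i. rewrite S_INR. pose proof (pos_INR i). split.
    - left. apply Rinv_0_lt_compat. lra.
    - apply Rinv_le_contravar; lra. }
  assert (H3 : S1 w M + S2 w M = sum_f_R0 (fun i => (-1)^i * bw w i) M).
  { unfold S1, S2. rewrite <- sum_plus. apply sum_eq. intros i _. unfold bw.
    pose proof (pos_INR i). field. split; [|split]; try lra. pose proof (den_pos w i Hw). lra. }
  assert (H4 := A_approx w Hw M).
  assert (H5 : / (2 * INR (S M) + 1 + w) + / (2 * INR (S M) + 1 - w) = bw w (S M)).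
  { unfold bw. pose proof (pos_INR (S M)). pose proof (den_pos w (S M) Hw). field. split; [|split]; lra. }
  assert (H6 := bw_bound w Hw M).
  pose proof (Rabs_triang (S1 w N1 - S1 w M) (S2 w N2 - S2 w M)).
  pose proof (Rabs_triang ((S1 w N1 - S1 w M) + (S2 w N2 - S2 w M)) (S1 w M + S2 w M - A (w^2))).
  replace (S1 w N1 - S1 w M + (S2 w N2 - S2 w M) + (S1 w M + S2 w M - A (w ^ 2))) with
    (S1 w N1 + S2 w N2 - A (w^2)) in H0 by ring.
  rewrite H3 in H0. lra.
Qed.

Lemma D_decomp : forall n p q c r, (0 < q)%nat -> (n * p = 4 * q * c + r)%nat -> (0 < r < 4 * q)%nat -> (c < n)%nat ->
  D n (INR p / (2 * INR q) - 1) / INR n =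
  (-1)^c * (S1 ((INR r - 2 * INR q) / (2 * INR q)) c + S2 ((INR r - 2 * INR q) / (2 * INR q)) (n - c - 1)).
Proof.
  intros n p q c r Hq Hnp Hr Hc.
  set (w := (INR r - 2 * INR q) / (2 * INR q)).
  assert (Hq' : 0 < INR q) by (apply lt_0_INR; lia).
  assert (Hn' : 0 < INR n) by (apply lt_0_INR; lia).
  assert (Hr1 : 0 < INR r) by (apply lt_0_INR; lia).
  assert (Hr2 : INR r < 4 * INR q).
  { replace 4 with (INR 4) by (simpl; ring). rewrite <- mult_INR. apply lt_INR. lia. }
  assert (Hnp' : INR n * INR p = 4 * INR q * INR c + INR r).
  { rewrite <- mult_INR. rewrite Hnp. rewrite plus_INR, !mult_INR. simpl. ring. }
  assert (Hw : -1 < w < 1).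
  { unfold w. split; [apply Rmult_lt_reg_r with (2 * INR q)|apply Rmult_lt_reg_r with (2 * INR q)]; try lra;
    field_simplify; lra. }
  set (g := fun k : nat => (-1)^k * / (2 * INR c + 1 + w - 2 * INR k)).
  assert (Hne : forall k, 2 * INR c + 1 + w - 2 * INR k <> 0).
  { intro k. unfold w. destruct (le_lt_dec k c) as [Hk|Hk].
    - apply le_INR in Hk. intro E.
      assert (E2 : (2 * INR c + 1 - 2 * INR k) * (2 * INR q) + (INR r - 2 * INR q) = 0).
      { rewrite <- (Rmult_0_l (2 * INR q)), <- E. field. lra. }
      nra.
    - apply le_INR in Hk. rewrite S_INR in Hk. intro E.
      assert (E2 : (2 * INR c + 1 - 2 * INR k) * (2 * INR q) + (INR r - 2 * INR q) = 0).
      { rewrite <- (Rmult_0_l (2 * INR q)), <- E. field. lra. }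
      nra. }
  assert (HD : D n (INR p / (2 * INR q) - 1) / INR n = sum_f_R0 g n).
  { unfold D, Rdiv at 1. rewrite Rmult_comm, scal_sum. apply sum_eq. intros k _.
    unfold g, node.
    assert (E : INR p / (2 * INR q) - 1 - (2 * INR k / INR n - 1) = (2 * INR c + 1 + w - 2 * INR k) / INR n).
    { unfold w. field_simplify; try lra.
      replace (INR p * INR n) with (INR n * INR p) by ring. rewrite Hnp'. field. lra. }
    rewrite E. specialize (Hne k). field. lra. }
  rewrite HD. rewrite (tech2 g c n Hc).
  replace (n - S c)%nat with (n - c - 1)%nat by lia.
  assert (HA : sum_f_R0 g c = (-1)^c * S1 w c).
  { unfold S1. rewrite <- sum_rev. apply sum_eq. intros k Hk. unfold g.
    rewrite minus_INR by lia. f_equal. f_equal. ring. }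
  assert (HB : sum_f_R0 (fun i => g (S c + i)%nat) (n - c - 1) = (-1)^c * S2 w (n - c - 1)).
  { unfold S2. rewrite scal_sum. apply sum_eq. intros i _. unfold g.
    rewrite pow_add, plus_INR, S_INR. simpl pow.
    assert (0 < 2 * INR i + 1 - w) by (pose proof (pos_INR i); lra).
    field. split; lra. }
  rewrite HA, HB. ring.
Qed.

Definition wr (q r : nat) : R := (INR r - 2 * INR q) / (2 * INR q).
Definition Vr (q R0 : nat) : R := (-1)^(R0 / (4 * q)) * A (wr q (R0 mod (4 * q)) ^ 2).

Lemma key : forall n p q, (0 < q)%nat -> (0 < p)%nat -> (p < 4 * q)%nat -> (0 < n)%nat ->
  ((n * p) mod (8 * q)) mod (4 * q) <> 0%nat ->
  Rabs (D n (INR p / (2 * INR q) - 1) / INR n - Vr q ((n * p) mod (8 * q))) <= 8 * INR q / INR n.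
Proof.
  intros n p q Hq Hp Hp4 Hn Hr0.
  set (R0 := ((n * p) mod (8 * q))%nat) in *.
  set (a := ((n * p) / (8 * q))%nat).
  set (b := (R0 / (4 * q))%nat).
  set (r := (R0 mod (4 * q))%nat) in *.
  assert (E1 : (n * p = 8 * q * a + R0)%nat) by (apply Nat.div_mod_eq).
  assert (E2 : (R0 = 4 * q * b + r)%nat) by (apply Nat.div_mod_eq).
  assert (Hr : (r < 4 * q)%nat) by (apply Nat.mod_upper_bound; lia).
  set (c := (2 * a + b)%nat).
  assert (E3 : (n * p = 4 * q * c + r)%nat) by (unfold c; nia).
  assert (Hc : (c < n)%nat) by nia.
  pose proof (D_decomp n p q c r Hq E3 ltac:(lia) Hc) as HD.
  rewrite HD. unfold Vr. fold b. fold r. fold (wr q r).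
  set (w := wr q r).
  assert (Hw : -1 < w < 1).
  { assert (Hq' : 0 < INR q) by (apply lt_0_INR; lia).
    assert (Hr1 : 0 < INR r) by (apply lt_0_INR; lia).
    assert (Hr2 : INR r < 4 * INR q).
    { replace 4 with (INR 4) by (simpl; ring). rewrite <- mult_INR. apply lt_INR. lia. }
    unfold w, wr. split; [apply Rmult_lt_reg_r with (2 * INR q)|apply Rmult_lt_reg_r with (2 * INR q)]; try lra;
    field_simplify; lra. }
  assert (Hs : (-1)^c = (-1)^b).
  { unfold c. rewrite pow_add. replace (2 * a)%nat with (a + a)%nat by lia. rewrite pow_add, m1sq. ring. }
  rewrite Hs. fold (wr q r). fold w.
  replace ((-1) ^ b * (S1 w c + S2 w (n - c - 1)) - (-1) ^ b * A (w ^ 2)) with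
    ((-1) ^ b * (S1 w c + S2 w (n - c - 1) - A (w ^ 2))) by ring.
  rewrite Rabs_m1pow.
  eapply Rle_trans. apply two_sums; auto.
  set (M := min c (n - c - 1)).
  assert (HM : (n <= 4 * q * S M)%nat).
  { unfold M. destruct (Nat.min_dec c (n - c - 1)) as [e|e]; rewrite e; nia. }
  apply le_INR in HM. rewrite mult_INR in HM. replace (INR (4 * q)) with (4 * INR q) in HM by (rewrite mult_INR; simpl; ring).
  assert (0 < INR n) by (apply lt_0_INR; lia).
  assert (0 < INR (S M)) by (apply lt_0_INR; lia).
  apply Rmult_le_reg_r with (INR n * INR (S M)). nra.
  field_simplify; lra.
Qed.

Lemma mod_mod2 : forall a m, (0 < m)%nat -> ((a mod (2 * m)) mod m = a mod m)%nat.
Proof.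
  intros a m Hm.
  assert (E1 : (a = 2 * m * (a / (2 * m)) + a mod (2 * m))%nat) by apply Nat.div_mod_eq.
  assert (E2 : (a mod (2 * m) = m * ((a mod (2 * m)) / m) + (a mod (2 * m)) mod m)%nat) by apply Nat.div_mod_eq.
  assert ((a mod (2 * m)) mod m < m)%nat by (apply Nat.mod_upper_bound; lia).
  apply Nat.mod_unique with (2 * (a / (2 * m)) + (a mod (2 * m)) / m)%nat; [lia|].
  revert E1 E2. generalize (a / (2 * m))%nat ((a mod (2 * m)) / m)%nat ((a mod (2 * m)) mod m)%nat (a mod (2 * m))%nat.
  intros. subst. lia.
Qed.

Lemma odd_mod2 : forall a m, (0 < m)%nat -> Nat.odd (a mod (2 * m)) = Nat.odd a.
Proof.
  intros a m Hm.
  assert (E1 : (a = 2 * m * (a / (2 * m)) + a mod (2 * m))%nat) by apply Nat.div_mod_eq.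
  rewrite E1 at 2. rewrite Nat.odd_add. rewrite <- Nat.mul_assoc, Nat.odd_mul. simpl. auto.
Qed.

Lemma INR4q : forall q, INR (4 * q) = 4 * INR q.
Proof. intros. rewrite mult_INR. simpl. ring. Qed.

Lemma node_a : forall n p q, (0 < q)%nat -> (0 < n)%nat -> (p < 4 * q)%nat ->
  ((n * p) mod (8 * q)) mod (4 * q) = 0%nat ->
  exists k, (k <= n)%nat /\ INR p / (2 * INR q) - 1 = node k n.
Proof.
  intros n p q Hq Hn Hp H.
  replace (8 * q)%nat with (2 * (4 * q))%nat in H by lia. rewrite mod_mod2 in H by lia.
  assert (E1 : (n * p = 4 * q * ((n * p) / (4 * q)) + (n * p) mod (4 * q))%nat) by apply Nat.div_mod_eq.
  set (k := ((n * p) / (4 * q))%nat) in *. rewrite H in E1.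
  exists k. split; [nia|].
  unfold node. apply (f_equal INR) in E1. rewrite mult_INR, Nat.add_0_r, mult_INR, INR4q in E1.
  assert (0 < INR q) by (apply lt_0_INR; lia). assert (0 < INR n) by (apply lt_0_INR; lia).
  assert (Hp2 : INR p = 4 * INR q * INR k / INR n) by (apply Rmult_eq_reg_l with (INR n); [rewrite E1; field|]; lra). rewrite Hp2. field. lra.
Qed.

Lemma node_b : forall n p q, (0 < q)%nat -> (0 < n)%nat ->
  ((n * p) mod (8 * q)) mod (4 * q) <> 0%nat ->
  forall k, INR p / (2 * INR q) - 1 <> node k n.
Proof.
  intros n p q Hq Hn H k Hk. apply H.
  replace (8 * q)%nat with (2 * (4 * q))%nat by lia. rewrite mod_mod2 by lia.
  unfold node in Hk.
  assert (0 < INR q) by (apply lt_0_INR; lia). assert (0 < INR n) by (apply lt_0_INR; lia).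
  assert (E : INR (n * p) = INR (4 * q * k)).
  { rewrite !mult_INR. simpl.
    apply Rmult_eq_reg_r with (/ (2 * INR q * INR n)). 2:{ apply Rinv_neq_0_compat. nra. }
    field_simplify; try lra.
    apply (f_equal (fun t => t + 1)) in Hk. field_simplify in Hk; try lra.
    replace (INR n * INR p / (2 * INR q)) with (INR p / (2 * INR q) * INR n) by (field; lra).
    rewrite Hk. field. lra. }
  apply INR_eq in E. rewrite E. rewrite Nat.mul_comm. apply Nat.Div0.mod_mul.
Qed.

Lemma pigeon : forall (f : nat -> nat) K, (forall j, (f j < K)%nat) ->
  exists r, (r < K)%nat /\ forall N, exists j, (N <= j)%nat /\ f j = r.
Proof.
  intros f K Hf. apply NNPP. intro Hno.
  assert (Hall : forall r, (r < K)%nat -> exists N, forall j, (N <= j)%nat -> f j <> r).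
  { intros r Hr. apply NNPP. intro Hc. apply Hno. exists r. split; auto. intro N.
    apply NNPP. intro Hc2. apply Hc. exists N. intros j Hj Hfj. apply Hc2. exists j. auto. }
  assert (Hind : forall K', (K' <= K)%nat -> exists N, forall j, (N <= j)%nat -> (K' <= f j)%nat).
  { induction K' as [|K' IH]; intros HK.
    - exists 0%nat. intros; lia.
    - destruct (IH ltac:(lia)) as [N1 HN1]. destruct (Hall K' ltac:(lia)) as [N2 HN2].
      exists (max N1 N2). intros j Hj. specialize (HN1 j ltac:(lia)). specialize (HN2 j ltac:(lia)). lia. }
  destruct (Hind K (le_n K)) as [N HN]. specialize (HN N (le_n N)). specialize (Hf N). lia.
Qed.

Lemma lim_freq : forall (u : nat -> R) L v, is_lim_seq u L ->
  (forall eps, 0 < eps -> forall N, exists j, (N <= j)%nat /\ Rabs (u j - v) < eps) -> L = Finite v.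
Proof.
  intros u L v HL Hf. apply is_lim_seq_spec in HL. destruct L as [l| |]; simpl in HL.
  - f_equal. apply NNPP. intro Hne.
    assert (Hpos : 0 < Rabs (v - l) / 2). { assert (v - l <> 0) by lra. pose proof (Rabs_pos_lt _ H). lra. }
    destruct (HL (mkposreal _ Hpos)) as [N HN]. destruct (Hf _ Hpos N) as [j [Hj Hu]].
    specialize (HN j Hj). simpl in HN.
    pose proof (Rabs_triang (v - u j) (u j - l)). replace (v - u j + (u j - l)) with (v - l) in H by ring.
    rewrite Rabs_minus_sym in Hu. lra.
  - destruct (HL (v + 1)) as [N HN]. destruct (Hf 1 Rlt_0_1 N) as [j [Hj Hu]].
    specialize (HN j Hj). apply Rabs_def2 in Hu. lra.
  - destruct (HL (v - 1)) as [N HN]. destruct (Hf 1 Rlt_0_1 N) as [j [Hj Hu]].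
    specialize (HN j Hj). apply Rabs_def2 in Hu. lra.
Qed.

Lemma sinc_ge : forall nj, strictly_increasing nj -> forall j, (j <= nj j)%nat.
Proof. intros nj H j. induction j; [lia|]. specialize (H j). lia. Qed.

Lemma small_bound : forall q eps, (0 < q)%nat -> 0 < eps ->
  exists N, (0 < N)%nat /\ forall n, (N <= n)%nat -> 8 * INR q / INR n < eps.
Proof.
  intros q eps Hq He.
  assert (Hq' : 0 < INR q) by (apply lt_0_INR; lia).
  destruct (archimed_cor1 (eps / (8 * INR q))) as [N [HN HN0]].
  { apply Rdiv_lt_0_compat; lra. }
  exists N. split; auto. intros n Hn.
  assert (0 < INR N) by (apply lt_0_INR; lia).
  assert (INR N <= INR n) by (apply le_INR; lia).
  assert (/ INR n <= / INR N) by (apply Rinv_le_contravar; lra).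
  unfold Rdiv. 
  assert (8 * INR q * / INR N < eps).
  { apply Rmult_lt_reg_l with (/ (8 * INR q)). apply Rinv_0_lt_compat; lra.
    rewrite <- Rmult_assoc, Rinv_l, Rmult_1_l by lra. unfold Rdiv in HN. lra. }
  nra.
Qed.

Lemma collect : forall p q nj L, (0 < q)%nat -> (0 < p)%nat -> (p < 4 * q)%nat ->
  strictly_increasing nj -> regular (INR p / (2 * INR q) - 1) nj ->
  is_lim_seq (fun j => D (nj j) (INR p / (2 * INR q) - 1) / INR (nj j)) L ->
  exists j R0, R0 = ((nj j * p) mod (8 * q))%nat /\ (R0 mod (4 * q) <> 0)%nat /\ L = Finite (Vr q R0).
Proof.
  intros p q nj L Hq Hp Hp4 Hs Hreg HL.
  destruct (pigeon (fun j => ((nj j * p) mod (8 * q))%nat) (8 * q)) as [R0 [HR0 Hfr]].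
  { intro j. apply Nat.mod_upper_bound. lia. }
  destruct Hreg as [j0 Hj0].
  assert (Hgood : forall j, (j0 <= j)%nat -> (1 <= j)%nat -> ((nj j * p) mod (8 * q)) mod (4 * q) <> 0%nat).
  { intros j Hj Hj1 Hc. pose proof (sinc_ge nj Hs j).
    destruct (node_a (nj j) p q Hq ltac:(lia) Hp4 Hc) as [k [Hk Hx]].
    exact (Hj0 j Hj k Hk Hx). }
  destruct (Hfr (max j0 1)) as [j1 [Hj1 Hf1]]. simpl in Hf1.
  exists j1, R0. split; [auto|]. split.
  { rewrite <- Hf1. apply Hgood; lia. }
  apply (lim_freq _ _ _ HL).
  intros eps He N. destruct (small_bound q eps Hq He) as [N1 [HN1 HN1']].
  destruct (Hfr (max N (max j0 N1))) as [j [Hj Hfj]]. simpl in Hfj.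
  exists j. split; [lia|].
  pose proof (sinc_ge nj Hs j).
  rewrite <- Hfj.
  eapply Rle_lt_trans. apply key; try lia. apply Hgood; lia.
  apply HN1'. lia.
Qed.

Lemma gcd8 : forall p q, Nat.gcd p q = 1%nat -> Nat.odd p = true -> Nat.gcd p (8 * q) = 1%nat.
Proof.
  intros p q Hg Ho. set (g := Nat.gcd p (8 * q)).
  assert (Hgp : Nat.divide g p) by apply Nat.gcd_divide_l.
  assert (Hg8 : Nat.divide g (8 * q)) by apply Nat.gcd_divide_r.
  assert (Hgq : Nat.gcd g q = 1%nat).
  { apply Nat.divide_1_r. rewrite <- Hg. apply Nat.gcd_greatest.
    - eapply Nat.divide_trans; [apply Nat.gcd_divide_l|exact Hgp].
    - apply Nat.gcd_divide_r. }
  assert (H8 : Nat.divide g 8).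
  { apply Nat.gauss with q; auto. rewrite Nat.mul_comm. auto. }
  destruct H8 as [k Hk].
  assert (Hnot2 : ~ Nat.divide 2 g).
  { intros [h Hh]. destruct Hgp as [m Hm]. rewrite Hm, Hh in Ho.
    replace (m * (h * 2))%nat with (2 * (m * h))%nat in Ho by lia.
    rewrite Nat.odd_mul in Ho. simpl in Ho. discriminate. }
  assert (g <= 8)%nat by (destruct k; lia).
  destruct g as [|[|[|[|[|[|[|[|[|g]]]]]]]]]; try lia;
   try (exfalso; apply Hnot2; first [exists 1%nat; lia | exists 2%nat; lia | exists 3%nat; lia | exists 4%nat; lia]).
Qed.

Lemma construct : forall p q R0, (0 < q)%nat -> (0 < p)%nat -> Nat.gcd p q = 1%nat -> Nat.odd p = true -> (p < 4 * q)%nat ->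
  (R0 < 8 * q)%nat -> (R0 mod (4 * q) <> 0)%nat ->
  exists nj, strictly_increasing nj /\ (forall j, Nat.odd (nj j) = Nat.odd R0) /\
    regular (INR p / (2 * INR q) - 1) nj /\
    is_lim_seq (fun j => D (nj j) (INR p / (2 * INR q) - 1) / INR (nj j)) (Vr q R0).
Proof.
  intros p q R0 Hq Hp Hg Ho Hp4 HR HR4.
  destruct (Nat.gcd_bezout_pos p (8 * q) Hp) as [u [v Huv]].
  rewrite gcd8 in Huv by auto.
  set (nj := fun j => (u * R0 + 8 * q * S j)%nat).
  assert (Hmod : forall j, ((nj j * p) mod (8 * q) = R0)%nat).
  { intro j. symmetry. apply Nat.mod_unique with (v * R0 + S j * p)%nat; auto.
    unfold nj. revert Huv. generalize (S j). intros s Huv.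
    replace ((u * R0 + 8 * q * s) * p)%nat with ((u * p) * R0 + 8 * q * s * p)%nat by ring.
    rewrite Huv. ring. }
  assert (Hpos : forall j, (0 < nj j)%nat) by (intro j; unfold nj; lia).
  exists nj. split; [|split; [|split]].
  - intro j. unfold nj. lia.
  - intro j. rewrite <- (Hmod j). replace (8 * q)%nat with (2 * (4 * q))%nat by lia.
    rewrite odd_mod2 by lia. rewrite Nat.odd_mul, Ho. symmetry. apply Bool.andb_true_r.
  - exists 0%nat. intros j _ k _. apply node_b; auto. rewrite Hmod. auto.
  - apply is_lim_seq_spec. intro eps. destruct eps as [eps He]. simpl.
    destruct (small_bound q eps Hq He) as [N [HN HN']].
    exists N. intros j Hj. rewrite <- (Hmod j).
    eapply Rle_lt_trans. apply key; try lia; [apply Hpos|intro Hc; apply HR4; rewrite <- (Hmod j) at 1; exact Hc].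
    apply HN'. unfold nj. nia.
Qed.

Lemma div_cases : forall R0 q, (0 < q)%nat -> (R0 < 8 * q)%nat ->
  (R0 < 4 * q /\ R0 / (4 * q) = 0 /\ R0 mod (4 * q) = R0)%nat \/
  (4 * q <= R0 /\ R0 / (4 * q) = 1 /\ R0 mod (4 * q) = R0 - 4 * q)%nat.
Proof.
  intros R0 q Hq HR. destruct (lt_dec R0 (4 * q)).
  - left. split; auto. split. apply Nat.div_small; auto. apply Nat.mod_small; auto.
  - right. split; [lia|]. split.
    + symmetry. apply Nat.div_unique with (R0 - 4 * q)%nat; lia.
    + symmetry. apply Nat.mod_unique with 1%nat; lia.
Qed.

Lemma Vr_odd : forall q R0, (0 < q)%nat -> (R0 < 8 * q)%nat -> Nat.odd R0 = true ->
  exists l : nat, (l < q)%nat /\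
       (Vr q R0 = A ((2 * INR l + 1) ^ 2 / (4 * INR q ^ 2)) \/
        Vr q R0 = - A ((2 * INR l + 1) ^ 2 / (4 * INR q ^ 2))).
Proof.
  intros q R0 Hq HR Ho.
  assert (Hq' : 0 < INR q) by (apply lt_0_INR; lia).
  assert (Hr : forall r, (r < 4 * q)%nat -> Nat.odd r = true -> exists l, (l < q)%nat /\
      wr q r ^ 2 = (2 * INR l + 1) ^ 2 / (4 * INR q ^ 2)).
  { intros r Hr4 Hro. apply Nat.odd_spec in Hro. destruct Hro as [s Hs].
    destruct (le_lt_dec q s).
    - exists (s - q)%nat. split; [lia|]. unfold wr. rewrite Hs, minus_INR by lia.
      rewrite plus_INR, mult_INR. simpl. field. lra.
    - exists (q - 1 - s)%nat. split; [lia|]. unfold wr. rewrite Hs.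
      rewrite !minus_INR by lia. rewrite plus_INR, mult_INR. simpl. field. lra. }
  unfold Vr. destruct (div_cases R0 q Hq HR) as [[H1 [H2 H3]]|[H1 [H2 H3]]]; rewrite H2, H3.
  - destruct (Hr R0 H1 Ho) as [l [Hl Hw]]. exists l. split; auto. left. rewrite Hw. simpl. ring.
  - destruct (Hr (R0 - 4 * q)%nat ltac:(lia)) as [l [Hl Hw]].
    { replace R0 with ((R0 - 4 * q) + 2 * (2 * q))%nat in Ho by lia.
      rewrite Nat.odd_add, Nat.odd_mul in Ho. simpl in Ho. rewrite Bool.xorb_false_r in Ho. auto. }
    exists l. split; auto. right. rewrite Hw. simpl. ring.
Qed.

Lemma Vr_even : forall q R0, (0 < q)%nat -> (R0 < 8 * q)%nat -> Nat.odd R0 = false -> (R0 mod (4 * q) <> 0)%nat ->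
  exists l : nat, (l < q)%nat /\
       (Vr q R0 = A (INR l ^ 2 / INR q ^ 2) \/
        Vr q R0 = - A (INR l ^ 2 / INR q ^ 2)).
Proof.
  intros q R0 Hq HR Ho H0.
  assert (Hq' : 0 < INR q) by (apply lt_0_INR; lia).
  assert (Hr : forall r, (r < 4 * q)%nat -> (r <> 0)%nat -> Nat.odd r = false -> exists l, (l < q)%nat /\
      wr q r ^ 2 = INR l ^ 2 / INR q ^ 2).
  { intros r Hr4 Hr0 Hro. 
    assert (Hev : Nat.even r = true) by (rewrite <- Nat.negb_odd, Hro; auto).
    apply Nat.even_spec in Hev. destruct Hev as [s Hs].
    destruct (le_lt_dec q s).
    - exists (s - q)%nat. split; [lia|]. unfold wr. rewrite Hs, minus_INR by lia.
      rewrite mult_INR. simpl. field. lra.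
    - exists (q - s)%nat. split; [lia|]. unfold wr. rewrite Hs.
      rewrite !minus_INR by lia. rewrite mult_INR. simpl. field. lra. }
  unfold Vr. destruct (div_cases R0 q Hq HR) as [[H1 [H2 H3]]|[H1 [H2 H3]]]; rewrite H2, H3; rewrite H3 in H0.
  - destruct (Hr R0 H1 H0 Ho) as [l [Hl Hw]]. exists l. split; auto. left. rewrite Hw. simpl. ring.
  - destruct (Hr (R0 - 4 * q)%nat ltac:(lia) H0) as [l [Hl Hw]].
    { replace R0 with ((R0 - 4 * q) + 2 * (2 * q))%nat in Ho by lia.
      rewrite Nat.odd_add, Nat.odd_mul in Ho. simpl in Ho. rewrite Bool.xorb_false_r in Ho. auto. }
    exists l. split; auto. right. rewrite Hw. simpl. ring.
Qed.

Theorem corollary5 (p q : nat) :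
  (0 < p)%nat -> (0 < q)%nat -> Nat.gcd p q = 1%nat -> Nat.odd p = true ->
  -1 < INR p / (2 * INR q) - 1 < 1 ->
  (forall L : Rbar,
     O_set (INR p / (2 * INR q)) L <->
     exists l : nat, (l < q)%nat /\
       (L = Finite (A ((2 * INR l + 1) ^ 2 / (4 * INR q ^ 2))) \/
        L = Finite (- A ((2 * INR l + 1) ^ 2 / (4 * INR q ^ 2))))) /\
  (forall L : Rbar,
     E_set (INR p / (2 * INR q)) L <->
     exists l : nat, (l < q)%nat /\
       (L = Finite (A (INR l ^ 2 / INR q ^ 2)) \/
        L = Finite (- A (INR l ^ 2 / INR q ^ 2)))).
Proof.
  intros Hp Hq Hg Ho Hx.
  assert (Hq' : 0 < INR q) by (apply lt_0_INR; lia).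
  assert (Hp4 : (p < 4 * q)%nat).
  { apply INR_lt. rewrite INR4q. destruct Hx as [_ Hx].
    apply Rmult_lt_reg_r with (/ (2 * INR q)). apply Rinv_0_lt_compat; lra.
    unfold Rdiv in Hx. field_simplify; lra. }
  split; intro L; split.
  - intros [nj [Hs [Hodd [Hreg HL]]]].
    destruct (collect p q nj L Hq Hp Hp4 Hs Hreg HL) as [j [R0 [HR0 [HR4 HLe]]]].
    assert (HRlt : (R0 < 8 * q)%nat) by (rewrite HR0; apply Nat.mod_upper_bound; lia).
    assert (HRo : Nat.odd R0 = true).
    { rewrite HR0. replace (8 * q)%nat with (2 * (4 * q))%nat by lia. rewrite odd_mod2 by lia.
      rewrite Nat.odd_mul, Ho, Hodd. auto. }
    destruct (Vr_odd q R0 Hq HRlt HRo) as [l [Hl [E|E]]]; exists l; split; auto; rewrite HLe, E; auto.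
  - intros [l [Hl HL]].
    set (R0 := (2 * q + 2 * l + 1 + (if Rbar_eq_dec L (Finite (A ((2 * INR l + 1) ^ 2 / (4 * INR q ^ 2)))) then 0 else 4 * q))%nat).
    assert (HRlt : (R0 < 8 * q)%nat) by (unfold R0; destruct Rbar_eq_dec; lia).
    assert (HR4 : (R0 mod (4 * q) <> 0)%nat).
    { unfold R0; destruct Rbar_eq_dec.
      - rewrite Nat.add_0_r, Nat.mod_small by lia. lia.
      - rewrite Nat.Div0.add_mod, Nat.Div0.mod_same, Nat.add_0_r, Nat.Div0.mod_mod, Nat.mod_small by lia. lia. }
    destruct (construct p q R0 Hq Hp Hg Ho Hp4 HRlt HR4) as [nj [Hs [Hodd [Hreg HLim]]]].
    exists nj. split; auto. split.
    { intro j. rewrite Hodd. unfold R0. destruct Rbar_eq_dec.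
      - rewrite Nat.add_0_r. replace (2 * q + 2 * l + 1)%nat with (1 + 2 * (q + l))%nat by lia.
        rewrite Nat.odd_add, Nat.odd_mul. auto.
      - replace (2 * q + 2 * l + 1 + 4 * q)%nat with (1 + 2 * (3 * q + l))%nat by lia.
        rewrite Nat.odd_add, Nat.odd_mul. auto. }
    split; auto.
    replace L with (Finite (Vr q R0)); auto.
    unfold Vr, R0. destruct Rbar_eq_dec as [e|ne].
    + rewrite Nat.add_0_r, Nat.div_small, Nat.mod_small by lia. rewrite e. f_equal. rewrite pow_O, Rmult_1_l. f_equal. unfold wr. rewrite !plus_INR, !mult_INR. simpl. field. lra.
    + destruct HL as [HL|HL]; [contradiction|]. rewrite HL. f_equal.
      replace ((2 * q + 2 * l + 1 + 4 * q) / (4 * q))%nat with 1%nat.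
      2:{ apply Nat.div_unique with (2 * q + 2 * l + 1)%nat; lia. }
      replace ((2 * q + 2 * l + 1 + 4 * q) mod (4 * q))%nat with (2 * q + 2 * l + 1)%nat.
      2:{ apply Nat.mod_unique with 1%nat; lia. }
      assert (Ew : wr q (2 * q + 2 * l + 1) ^ 2 = (2 * INR l + 1) ^ 2 / (4 * INR q ^ 2))
        by (unfold wr; rewrite !plus_INR, !mult_INR; simpl; field; lra).
      rewrite Ew. ring.
  - intros [nj [Hs [Hev [Hreg HL]]]].
    destruct (collect p q nj L Hq Hp Hp4 Hs Hreg HL) as [j [R0 [HR0 [HR4 HLe]]]].
    assert (HRlt : (R0 < 8 * q)%nat) by (rewrite HR0; apply Nat.mod_upper_bound; lia).
    assert (HRo : Nat.odd R0 = false).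
    { rewrite HR0. replace (8 * q)%nat with (2 * (4 * q))%nat by lia. rewrite odd_mod2 by lia.
      rewrite Nat.odd_mul, Ho. rewrite <- Nat.negb_even, Hev. auto. }
    destruct (Vr_even q R0 Hq HRlt HRo HR4) as [l [Hl [E|E]]]; exists l; split; auto; rewrite HLe, E; auto.
  - intros [l [Hl HL]].
    set (R0 := (2 * q + 2 * l + (if Rbar_eq_dec L (Finite (A (INR l ^ 2 / INR q ^ 2))) then 0 else 4 * q))%nat).
    assert (HRlt : (R0 < 8 * q)%nat) by (unfold R0; destruct Rbar_eq_dec; lia).
    assert (HR4 : (R0 mod (4 * q) <> 0)%nat).
    { unfold R0; destruct Rbar_eq_dec.
      - rewrite Nat.add_0_r, Nat.mod_small by lia. lia.
      - rewrite Nat.Div0.add_mod, Nat.Div0.mod_same, Nat.add_0_r, Nat.Div0.mod_mod, Nat.mod_small by lia. lia. }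
    destruct (construct p q R0 Hq Hp Hg Ho Hp4 HRlt HR4) as [nj [Hs [Hodd [Hreg HLim]]]].
    exists nj. split; auto. split.
    { intro j. rewrite <- Nat.negb_odd, Hodd. unfold R0. destruct Rbar_eq_dec.
      - rewrite Nat.add_0_r. replace (2 * q + 2 * l)%nat with (2 * (q + l))%nat by lia.
        rewrite Nat.odd_mul. auto.
      - replace (2 * q + 2 * l + 4 * q)%nat with (2 * (3 * q + l))%nat by lia.
        rewrite Nat.odd_mul. auto. }
    split; auto.
    replace L with (Finite (Vr q R0)); auto.
    unfold Vr, R0. destruct Rbar_eq_dec as [e|ne].
    + rewrite Nat.add_0_r, Nat.div_small, Nat.mod_small by lia. rewrite e. f_equal. rewrite pow_O, Rmult_1_l. f_equal. unfold wr. rewrite !plus_INR, !mult_INR. simpl. field. lra.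
    + destruct HL as [HL|HL]; [contradiction|]. rewrite HL. f_equal.
      replace ((2 * q + 2 * l + 4 * q) / (4 * q))%nat with 1%nat.
      2:{ apply Nat.div_unique with (2 * q + 2 * l)%nat; lia. }
      replace ((2 * q + 2 * l + 4 * q) mod (4 * q))%nat with (2 * q + 2 * l)%nat.
      2:{ apply Nat.mod_unique with 1%nat; lia. }
      assert (Ew : wr q (2 * q + 2 * l) ^ 2 = INR l ^ 2 / INR q ^ 2)
        by (unfold wr; rewrite !plus_INR, !mult_INR; simpl; field; lra).
      rewrite Ew. ring.
Qed.
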